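(* Let $T$ be a chain all of whose entries lie in $\{1,2\}$, which contains the chain $[212]$, and which is not equal to $[212]$ itself. Then $\mathcal{Z}(T)\le\tfrac13$.
   Context: A chain is a finite sequence $T=[a_1a_2\dots a_n]$ of positive integers ($n\ge1$). For a chain $S=[s_1\dots s_m]$ write $\rho_S=[0;s_1,\dots,s_m]$ (with $\rho_\emptyset=0$ for the empty chain), and $[s_1;s_2,\dots,s_m]$ for the finite continued fraction, which equals $1/\rho_S$. Define $\mathcal{Z}(T)=\big(\max_{1\le i\le n}([a_i;a_{i+1},\dots,a_n]+[0;a_{i-1},\dots,a_1])\big)^{-1}$, where for $i=1$ the second summand is $0$. A chain contains the chain $[c_1\dots c_k]$ if it has consecutive entries $c_1,\dots,c_k$. *)

(* Defs.v *)
From HB Require Import structures.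
From mathcomp Require Import all_boot all_order all_algebra.
Set Implicit Arguments. Unset Strict Implicit. Unset Printing Implicit Defensive.
Import Order.TTheory GRing.Theory Num.Theory.
Local Open Scope ring_scope.

Definition is_chain (T : seq nat) : bool := (size T > 0)%N && all (fun a => 0 < a)%N T.

Fixpoint cf0 (S : seq nat) : rat :=
  match S with
  | [::] => 0
  | s :: S' => (s%:R + cf0 S')^-1
  end.

Definition cfi (S : seq nat) : rat :=
  match S with
  | [::] => 0
  | s :: S' => s%:R + cf0 S'
  end.

(* Z(T) = (max_{1<=i<=n} ([a_i; a_{i+1},...,a_n] + [0; a_{i-1},...,a_1]))^-1.
   With 0-based index i: drop i T = [a_{i+1} ... a_n], rev (take i T) = [a_i ... a_1]. *)
Definition Zc (T : seq nat) : rat :=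
  (\big[Num.max/0]_(i < size T) (cfi (drop i T) + cf0 (rev (take i T))))^-1.

(* Main.v *)
Require Import Defs.
From HB Require Import structures.
From mathcomp Require Import all_boot all_order all_algebra.
From mathcomp Require Import lra zify.
Import Order.TTheory GRing.Theory Num.Theory.
Local Open Scope ring_scope.

Lemma cf0_bnd (S : seq nat) : all (fun a => 0 < a)%N S -> 0 <= cf0 S <= 1.
Proof.
elim: S => [|s S IH] /=; first by idtac. 
case/andP=> hs /IH /andP[h0 h1].
have hs1 : 1 <= (s%:R : rat) by rewrite ler1n.
have hp : 0 < (s%:R + cf0 S : rat) by lra.
apply/andP; split; first by rewrite invr_ge0 ltW.
rewrite invf_le1 //; lra.
Qed.

Lemma inv_ge (x c : rat) : 0 < x -> x <= c -> c^-1 <= x^-1.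
Proof. move=> hx hc; rewrite lef_pV2 ?posrE //; lra. Qed.

Lemma cf0_cons (a : nat) S : (0 < a)%N -> (a <= 2)%N -> all (fun a => 0 < a)%N S ->
  1/3 <= cf0 (a :: S).
Proof.
move=> ha ha2 /cf0_bnd /andP[h0 h1] /=.
have : (a%:R : rat) <= 2 by rewrite (ler_nat rat a 2).
have : 1 <= (a%:R : rat) by rewrite ler1n.
move=> h1a h2a.
have -> : (1/3 : rat) = 3^-1 by rewrite div1r.
apply: inv_ge; lra.
Qed.

Lemma cf0_12 S : all (fun a => 0 < a)%N S -> 2/3 <= cf0 [:: 1%N, 2%N & S].
Proof.
move=> /cf0_bnd /andP[h0 h1] /=.
have hu : (2%:R + cf0 S)^-1 <= 2^-1 :> rat by apply: inv_ge; lra.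
have hu0 : 0 <= (2%:R + cf0 S)^-1 :> rat by rewrite invr_ge0; lra.
have -> : (2/3 : rat) = (3/2)^-1 by rewrite invf_div.
apply: inv_ge; lra.
Qed.

Theorem lemma3p2 (T : seq nat) :
  is_chain T ->
  all (fun a => (a == 1)%N || (a == 2)%N) T ->
  infix [:: 2; 1; 2]%N T ->
  T != [:: 2; 1; 2]%N ->
  Zc T <= 1 / 3.
Proof.
move=> /andP[_ hpos] h12 /infixP [p [q eT]] hne.
have hposr : forall s, all (fun a => 0 < a)%N s -> all (fun a => 0 < a)%N (rev s).
  by move=> s; rewrite all_rev.
have hle2 : forall a, a \in T -> (a <= 2)%N.
  by move=> a /(allP h12) /orP[] /eqP ->.
suff [n [hn hi]] : exists n, (n < size T)%N /\ 3 <= cfi (drop n T) + cf0 (rev (take n T)).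
  have hb0 : cfi (drop n T) + cf0 (rev (take n T)) <=
     \big[Num.max/0]_(j < size T) (cfi (drop j T) + cf0 (rev (take j T))).
    exact: (Order.TotalTheory.le_bigmax _ (fun j : 'I_(size T) => cfi (drop j T) + cf0 (rev (take j T))) (Ordinal hn)).
  have hb := le_trans hi hb0.
  rewrite /Zc div1r; apply: inv_ge => //; lra.
rewrite eT !all_cat in hpos; case/and3P: hpos => hp _ hq.
case: q eT hq => [|a q'] eT hq.
  case/lastP: p eT hp => [|p' a] eT hp; first by rewrite eT cats0 eqxx in hne.
  exists (size (rcons p' a)); split; first by rewrite eT !size_cat size_rcons /=; lia.
  have -> : drop (size (rcons p' a)) T = [:: 2%N, 1%N, 2%N & [::]].
    by rewrite eT drop_size_cat.
  have -> : rev (take (size (rcons p' a)) T) = a :: rev p'.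
    by rewrite eT take_size_cat // rev_rcons.
  move: hp; rewrite all_rcons => /andP[ha hp'].
  have ha2 : (a <= 2)%N by apply: hle2; rewrite eT mem_cat mem_rcons mem_head.
  have h1 := @cf0_cons a (rev p') ha ha2 (hposr _ hp').
  have h2 := @cf0_12 [::] isT.
  rewrite /cfi -/(cf0 [:: 1%N, 2%N & [::]]).
  lra.
exists (size p + 2)%N; split; first by rewrite eT !size_cat /=; lia.
have -> : drop (size p + 2) T = [:: 2%N, a & q'].
  by rewrite eT drop_cat ltnNge leq_addr /= addKn.
have -> : take (size p + 2) T = p ++ [:: 2%N; 1%N].
  by rewrite eT take_cat ltnNge leq_addr /= addKn.
rewrite rev_cat.
have -> : rev [:: 2%N; 1%N] = [:: 1%N; 2%N] by [].
move: hq => /andP[ha hq'].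
have ha2 : (a <= 2)%N by apply: hle2; rewrite eT !mem_cat !inE eqxx !orbT.
have h1 := @cf0_cons a q' ha ha2 hq'.
have h2 := @cf0_12 (rev p) (hposr _ hp).
rewrite /cfi. rewrite cat_cons.
lra.
Qed.
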